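(* Let $c_b=\sum_{a=b+1}^{2b}|c_{a,b}|$. There is a constant $C_3<\infty$ such that $c_b\le C_3^b\, b!$ for all $b\ge1$.
   Context: The $c_{a,b}$, $(a,b)\in I=\{b\ge1,\ b+1\le a\le 2b\}$, are the lace-expansion coefficients for self-avoiding walk on $\mathbb Z^d$ (with memory $\tau\ge a$): let $f_\tau(a,N,D)$ be the number of equivalence classes, under the $2^D D!$ signed coordinate permutations of $\mathbb Z^D$, of memory-$\tau$ lace graphs of length $a$, type $N$ and dimensionality exactly $D$ (lace graphs are nearest-neighbour walks with additional structure as in the Brydges–Spencer lace expansion; the set of lace graphs is invariant under lattice symmetries, there are at most $(2D)^a$ lace graphs of length $a$ in $\mathbb Z^D$ in total over all types, and a lace graph of dimensionality $D$ has length at least $2D$). With $s=1/(2d)$, $c_{a,b,N}$ is defined by $\sum_{D=1}^{\lfloor a/2\rfloor}f_\tau(a,N,D)\,2d(2d-2)\cdots(2d-2D+2)=\sum_{b=\lceil a/2\rceil}^{a-1}c_{a,b,N}s^{b-a}$, and $c_{a,b}=\sum_{N\ge1}(-1)^{N+1}c_{a,b,N}$. *)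

(* Defs.v *)
From HB Require Import structures.
From mathcomp Require Import all_boot all_order all_algebra.
Set Implicit Arguments. Unset Strict Implicit. Unset Printing Implicit Defensive.
Import Order.TTheory GRing.Theory Num.Theory.

Local Open Scope ring_scope.

(* The polynomial 2d(2d-2)...(2d-2D+2) in the variable x = 2d = s^{-1}. *)
Definition falling2 (D : nat) : {poly int} :=
  \prod_(j < D) ('X - (2 * j)%N%:R%:P).

(* f a N D = f_tau(a,N,D): number of equivalence classes (under the 2^D D!
   signed coordinate permutations) of memory-tau lace graphs of length a,
   type N, dimensionality exactly D. *)

Definition lacePoly (f : nat -> nat -> nat -> nat) (a N : nat) : {poly int} :=
  \sum_(1 <= D < (a./2).+1) (f a N D)%:R *: falling2 D.

(* c_{a,b,N} = coefficient of s^{b-a} = (2d)^{a-b}. *)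
Definition c_abN (f : nat -> nat -> nat -> nat) (a b N : nat) : int :=
  (lacePoly f a N)`_(a - b).

(* c_{a,b} = sum_{N>=1} (-1)^{N+1} c_{a,b,N}; types satisfy N <= a. *)
Definition c_ab (f : nat -> nat -> nat -> nat) (a b : nat) : int :=
  \sum_(1 <= N < a.+1) (-1) ^+ N.+1 * c_abN f a b N.

Definition c_b (f : nat -> nat -> nat -> nat) (b : nat) : nat :=
  (\sum_(b.+1 <= a < (2 * b).+1) `|c_ab f a b|%N)%N.

(* Main.v *)
Require Import Defs.
From Stdlib Require Import Arith Lia.
From HB Require Import structures.
From mathcomp Require Import all_boot all_order all_algebra.
Import Order.TTheory GRing.Theory Num.Theory.

Lemma abszB_le (x y : int) : (`|(x - y)%R| <= `|x| + `|y|)%N.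
Proof. have := ler_normB x y. by rewrite -!abszE -PoszD lez_nat. Qed.

Lemma abszD_le (x y : int) : (`|(x + y)%R| <= `|x| + `|y|)%N.
Proof. have := ler_normD x y. by rewrite -!abszE -PoszD lez_nat. Qed.

Lemma absz_sum I (r : seq I) (P : pred I) (F : I -> int) :
  (`|(\sum_(i <- r | P i) F i)%R| <= \sum_(i <- r | P i) `|F i|)%N.
Proof.
elim: r => [|x r IH]; first by rewrite !big_nil.
rewrite !big_cons; case: (P x) => //.
exact: leq_trans (abszD_le _ _) (leq_add (leqnn _) IH).
Qed.

Lemma absz_natR n : `|(n%:R : int)%R|%N = n.
Proof. by rewrite natz absz_nat. Qed.

Lemma falling2S D : falling2 D.+1 = (falling2 D * ('X - ((2 * D)%N%:R)%:P))%R.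
Proof. by rewrite /falling2 big_ord_recr. Qed.

Lemma fall_coef (M D : nat) : (2 * D <= M)%N -> forall k,
  (`|((falling2 D)`_k)%R| <= 2 ^ D * M ^ (D - k))%N /\ ((D < k)%N -> ((falling2 D)`_k)%R = 0%R).
Proof.
elim: D => [|D IH] HM k.
  rewrite /falling2 big_ord0 coef1; case: k => //.
have HM' : (2 * D <= M)%N by apply: leq_trans HM; rewrite leq_pmul2l.
have H2D : (2 * D <= M)%N := HM'.
rewrite falling2S mulrBr coefB coefMX coefMC.
case: k => [|k] /=.
  split => //; rewrite sub0r abszN abszM absz_natR.
  have [H1 _] := IH HM' 0%N.
  apply: leq_trans (leq_mul H1 H2D) _.
  rewrite !subn0 !expnSr -mulnA.
  by apply: leq_mul (leq_pmulr _ _) (leqnn _).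
rewrite subSS; have [H1 Z1] := IH HM' k; have [H2 Z2] := IH HM' k.+1.
split; last first.
  by move=> Hk; rewrite Z1 // Z2 ?mul0r ?subr0 // ltnW.
apply: leq_trans; first exact: abszB_le. rewrite abszM absz_natR.
case: (ltnP k D) => Hk; last first.
  rewrite Z2 ?ltnS //= mul0n addn0; apply: leq_trans H1 _.
  by rewrite expnS -mulnA leq_pmull.
rewrite expnS -mulnA [2 * (2 ^ D * _)]mul2n -addnn; apply: leq_add => //.
apply: leq_trans (leq_mul H2 H2D) _.
by rewrite -mulnA -expnSr subnSK.
Qed.

Lemma pow_le_fact_bin m n : (m ^ n <= n`! * 'C(m + n, n))%N.
Proof.
elim: n => [|n IH]; first by rewrite expn0 fact0 addn0 bin0.
rewrite expnS factS addnS -mulnA mulnCA -mul_bin_diag /= mulnCA.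
apply: leq_mul; last exact: IH.
by rewrite (leq_trans (leq_addr n m)) .
Qed.

Lemma bin_le_exp N k : ('C(N, k) <= 2 ^ N)%N.
Proof.
elim: N k => [|N IH] [|k]; rewrite ?bin0 ?expn_gt0 //.
by rewrite binS expnS mul2n -addnn leq_add.
Qed.

Lemma pow_le_fact n : (n ^ n <= n`! * 4 ^ n)%N.
Proof.
apply: leq_trans (pow_le_fact_bin n n) _; rewrite leq_mul2l.
by rewrite (_ : 4 = 2 * 2)%N // expnMn -expnD bin_le_exp orbT.
Qed.

Lemma perD a b D S : (1 <= D)%N -> (D <= b)%N -> (b <= a)%N ->
  (2 ^ D * D`! * S <= (2 * D) ^ a)%N ->
  (`|((falling2 D)`_(a - b))%R| * S <= 64 ^ b * b`!)%N.
Proof.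
move=> HD Hb Hab HS.
have [H1 Z1] := @fall_coef (2*D) D (leqnn (2 * D)) (a - b).
case: (ltnP D (a - b)) => Hk; first by rewrite Z1.
rewrite -(leq_pmul2l (fact_gt0 D)).
apply: (@leq_trans (D`! * (2 ^ D * (2 * D) ^ (D - (a - b)) * S))).
  by rewrite leq_mul2l leq_mul2r H1 !orbT.
have -> : (D`! * (2 ^ D * (2 * D) ^ (D - (a - b)) * S) =
   (2 * D) ^ (D - (a - b)) * (2 ^ D * D`! * S))%N.
  by rewrite -!multE; ring.
apply: (@leq_trans ((2 * D) ^ (D - (a - b)) * (2 * D) ^ a)).
  by rewrite leq_mul2l HS orbT.
rewrite -expnD.
have -> : (D - (a - b) + a = D + b)%N.
  move/ssrnat.leP: Hk; move/ssrnat.leP: Hab; rewrite -!minusE -!plusE; lia.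
rewrite expnMn !expnD.
have E1 : (2 ^ D * 2 ^ b <= 4 ^ b)%N.
  by rewrite -expnD (_ : 4 = 2 * 2)%N // expnMn -expnD leq_exp2l // leq_add2r.
have E2 : (D ^ D <= D`! * 4 ^ b)%N.
  apply: leq_trans (pow_le_fact D) _; rewrite leq_mul2l leq_exp2l //.
  by rewrite Hb orbT.
have E3 : (D ^ b <= b`! * 4 ^ b)%N.
  apply: leq_trans (pow_le_fact b); rewrite leq_exp2r //.
  exact: leq_trans HD Hb.
apply: leq_trans (leq_mul E1 (leq_mul E2 E3)) _.
rewrite (_ : 64 = 4 * 4 * 4)%N // !expnMn.
by rewrite -!multE; apply/ssrnat.leP; apply: Nat.eq_le_incl; ring.
Qed.

Lemma stepA f a b :
  (`|c_ab f a b| <= \sum_(1 <= D < (a./2).+1)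
      `|((falling2 D)`_(a - b))%R| * \sum_(1 <= N < a.+1) f a N D)%N.
Proof.
rewrite /c_ab; apply: leq_trans; first exact: absz_sum.
under eq_bigr do rewrite abszMsign.
apply: (@leq_trans (\sum_(1 <= N < a.+1) \sum_(1 <= D < (a./2).+1)
          f a N D * `|((falling2 D)`_(a - b))%R|)).
  apply: leq_sum => N _.
  rewrite /c_abN /lacePoly coef_sum; apply: leq_trans; first exact: absz_sum.
  apply: leq_sum => D _; by rewrite coefZ abszM absz_natR.
rewrite exchange_big /=; apply: leq_sum => D _.
by rewrite big_distrr /=; apply: leq_sum => N _; rewrite mulnC.
Qed.

Theorem lemma4 (f : nat -> nat -> nat -> nat)
  (Htype : forall a N D, (a < N)%N -> f a N D = 0%N)
  (Hcount : forall a D, (1 <= D)%N ->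
     (2 ^ D * D`! * \sum_(1 <= N < a.+1) f a N D <= (2 * D) ^ a)%N) :
  exists C : nat, forall b : nat, (1 <= b)%N -> (c_b f b <= C ^ b * b`!)%N.
Proof.
exists 256%N => b Hb.
set K := (64 ^ b * b`!)%N.
have Ha : forall a, (b.+1 <= a < (2 * b).+1)%N -> (`|c_ab f a b| <= b * K)%N.
  move=> a /andP [Ha1 Ha2].
  apply: leq_trans (stepA f a b) _.
  have Hhalf : (a./2 <= b)%N.
    by rewrite -[b in (_ <= b)%N]doubleK -mul2n half_leq // -ltnS.
  apply: (@leq_trans (\sum_(1 <= D < (a./2).+1) K)).
    rewrite big_nat_cond [X in (_ <= X)%N]big_nat_cond.
    apply: leq_sum => D /andP [/andP [HD1 HD2] _].
    apply: perD => //; first by apply: leq_trans Hhalf; rewrite -ltnS.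
      exact: ltnW.
    exact: Hcount.
  rewrite sum_nat_const_nat subSS subn0 leq_mul2r Hhalf orbT //.
apply: (@leq_trans (\sum_(b.+1 <= a < (2 * b).+1) (b * K))).
  rewrite /c_b big_nat_cond [X in (_ <= X)%N]big_nat_cond.
  by apply: leq_sum => a /andP [H _]; apply: Ha.
rewrite sum_nat_const_nat.
have -> : ((2 * b).+1 - b.+1 = b)%N by rewrite subSS mul2n -addnn addnK.
have Hb2 : (b <= 2 ^ b)%N by apply: ltnW; apply: ltn_expl.
have Hbb : (b * b <= 4 ^ b)%N.
  by rewrite (_ : 4 = 2 * 2)%N // expnMn leq_mul.
rewrite /K (_ : 256 = 4 * 64)%N // expnMn -mulnA mulnA.
exact: leq_mul Hbb (leqnn _).
Qed.
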